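(* Let $p,q\in\mathbb N$ and $\bm P\in\{0,1\}^{p\times q}$ be such that every row and every column of $\bm P$ contains at most one entry equal to $1$. Then $\textsc{FindCounterpart}(\bm P)$ equals the zero vector $\bm 0\in\mathbb R^p$ if $\bm P$ is the zero matrix, and otherwise equals the leftmost column of $\bm P$ that contains an entry $1$.
   Context: $\textsc{FindCounterpart}(\bm P)$ for $\bm P\in\mathbb R^{p\times q}$ is computed as follows: let $\bm c\in\mathbb R^q$ with $c_j=\sum_{i=1}^pP_{ij}$ (column sums); replace $\bm c$ by its cumulative sum, $c_j\leftarrow\sum_{l=1}^jc_l$; apply elementwise the triangle window $\mathrm{tw}(x)=0$ if $x\le0$, $x$ if $0<x\le1$, $2-x$ if $1<x\le2$, $0$ if $x>2$; return the column vector $\bm P\bm c^\top\in\mathbb R^p$. *)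

(* Defs.v *)
From mathcomp Require Import all_boot all_order all_algebra.
Set Implicit Arguments. Unset Strict Implicit. Unset Printing Implicit Defensive.
Import Order.TTheory GRing.Theory Num.Theory.
Local Open Scope ring_scope.

Definition tw {R : realFieldType} (x : R) : R :=
  if x <= 0 then 0 else if x <= 1 then x else if x <= 2 then 2 - x else 0.

Definition find_counterpart {R : realFieldType} {p q : nat} (P : 'M[R]_(p, q))
  : 'cV[R]_p :=
  let colsum (l : 'I_q) := \sum_(i < p) P i l in
  let c := \row_(j < q) tw (\sum_(l < q | (l <= j)%N) colsum l) in
  P *m c^T.

Definition is01 {R : realFieldType} {p q : nat} (P : 'M[R]_(p, q)) : Prop :=
  forall i j, P i j = 0 \/ P i j = 1.

Definition at_most_one_per_line {R : realFieldType} {p q : nat}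
  (P : 'M[R]_(p, q)) : Prop :=
  (forall i j j', P i j = 1 -> P i j' = 1 -> j = j') /\
  (forall i i' j, P i j = 1 -> P i' j = 1 -> i = i').

(* Main.v *)
Require Import Defs.
From mathcomp Require Import all_boot all_order all_algebra.
Import Order.TTheory GRing.Theory Num.Theory.
Local Open Scope ring_scope.

Lemma tw_nat (R : realFieldType) (n : nat) : tw (n%:R : R) = if n == 1%N then 1 else 0.
Proof.
rewrite /tw; case: n => [|[|[|n]]] /=.
- by rewrite lexx.
- by rewrite ler10 lexx.
- rewrite (ler_nat R 2 0) (ler_nat R 2 1) (ler_nat R 2 2) /=. 
  by rewrite subrr.
- by rewrite (ler_nat R n.+3 0) (ler_nat R n.+3 1) (ler_nat R n.+3 2).
Qed.

Theorem proposition7 (R : realFieldType) (p q : nat) (P : 'M[R]_(p, q)) :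
  is01 P -> at_most_one_per_line P ->
  (P = 0 -> find_counterpart P = 0) /\
  (P <> 0 ->
   exists j : 'I_q,
     (exists i, P i j = 1) /\
     (forall l : 'I_q, (l < j)%N -> forall i, P i l = 0) /\
     find_counterpart P = col j P).
Proof.
move=> H01 [Hrow Hcol]; split.
  by move=> ->; rewrite /find_counterpart mul0mx.
move=> Pn0.
pose nz (l : 'I_q) := [exists i, P i l == 1].
have nzF l : ~~ nz l -> forall i, P i l = 0.
  rewrite /nz negb_exists => /forallP H i; case: (H01 i l) => // E.
  by move: (H i); rewrite E eqxx.
have colE l : \sum_(i < p) P i l = (nz l)%:R.
  case: (boolP (nz l)) => [/existsP [i0 /eqP Hi0]|Hn].
    rewrite (bigD1 i0) //= Hi0 big1 ?addr0 // => i Hi.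
    case: (H01 i l) => // E; by rewrite (Hcol _ _ _ E Hi0) eqxx in Hi.
  by rewrite big1 // => i _; apply: nzF.
have [j1 Hj1] : exists j, nz j.
  case: (boolP [exists j, nz j]) => [/existsP//|]; rewrite negb_exists => /forallP H; exfalso; apply: Pn0; apply/matrixP => i j.
  by rewrite mxE; apply: nzF.
case: (arg_minnP (fun j : 'I_q => nat_of_ord j) Hj1) => j0 Hj0 Hmin.
have before (l : 'I_q) : (l < j0)%N -> ~~ nz l.
  by move=> Hl; apply/negP => /Hmin; rewrite leqNgt Hl.
exists j0; split; first by case/existsP: Hj0 => i /eqP; exists i.
split; first by move=> l Hl; apply: nzF; apply: before.
apply/matrixP => i k; rewrite /find_counterpart !mxE.
have cE (j : 'I_q) : (\row_(j < q) tw (\sum_(l < q | (l <= j)%N) \sum_(i < p) P i l))^T j k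
     = tw ((\sum_(l < q | (l <= j)%N) (nz l : nat))%:R).
  by rewrite !mxE natr_sum; congr tw; apply: eq_bigr => l _; rewrite colE.
rewrite (bigD1 j0) //= big1 ?addr0.
  rewrite cE tw_nat.
  suff -> : (\sum_(l < q | (l <= j0)%N) (nz l : nat))%N = 1%N by rewrite mulr1.
  rewrite (bigD1 j0) //= Hj0 big1 // => l /andP [Hl Hne].
  have : (l < j0)%N by rewrite ltn_neqAle Hl andbT; exact: Hne.
  by move/before/negbTE => ->.
move=> j Hj; case: (boolP (nz j)) => Hnz; last by rewrite nzF // mul0r.
have Hlt : (j0 < j)%N.
  by rewrite ltn_neqAle eq_sym Hmin // andbT; exact: Hj.
rewrite cE tw_nat.
suff : (2 <= \sum_(l < q | (l <= j)%N) (nz l : nat))%N.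
  by case: (_ == _)/eqP => [->|] //; rewrite mulr0.
rewrite (bigD1 j) //= Hnz (bigD1 j0) /=; last by rewrite (ltnW Hlt) eq_sym Hj.
by rewrite Hj0.
Qed.
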